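(* Let $\mathfrak{g}$ be a nice nilpotent Lie algebra of dimension $n$ with nice diagram $\Delta$, $m$ arrows, and structure constants $c\in\mathbb{R}^m$, and let $k\in\mathbb{R}$ and $\delta\in(\mathbb{Z}_2)^n$. Then $\mathfrak{g}$ has a diagonal metric $g=\sum_i g_i e^i\otimes e^i$ with $\operatorname{logsign} g=\delta$ whose Ricci operator satisfies $\operatorname{Ric}=\frac12 k\,\mathrm{id}$ if and only if there exists $X\in\mathbb{R}^m$ such that: (K) $M_\Delta^{T}X=[k]$; (H) $X$ does not belong to any coordinate hyperplane, i.e. all entries of $X$ are nonzero; (L) $\operatorname{logsign} X=M_{\Delta,2}\,\delta$; (P) for a basis $\alpha_1,\dots,\alpha_r$ of $\ker M_\Delta^{T}\subset\mathbb{R}^m$, one has $\lvert X\rvert^{\alpha_i}=\lvert c\rvert^{2\alpha_i}$ for $i=1,\dots,r$.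
   Context: A nice basis of a real Lie algebra $\mathfrak{g}$ is a basis $\{e_1,\dots,e_n\}$ with dual basis $\{e^1,\dots,e^n\}$ such that each bracket $[e_i,e_j]$ is a multiple of some $e_h$ and each contraction $e_i\lrcorner\,de^j$ is a multiple of some $e^h$ (here $d$ is the Chevalley–Eilenberg differential, $de^k(x,y)=-e^k([x,y])$); a nice Lie algebra is a Lie algebra with a fixed nice basis. For a nice nilpotent Lie algebra, the nice diagram $\Delta$ has nodes $1,\dots,n$ and an arrow $i\xrightarrow{j}k$ (from $i$ to $k$, labelled by $j$) whenever $e_k$ is a nonzero multiple of $[e_i,e_j]$. Let $\mathcal I_\Delta$ be the set of triples $\{\{i,j\},k\}$ for which $i\xrightarrow{j}k$ is an arrow, $m=\lvert\mathcal I_\Delta\rvert$, ordered lexicographically by $(k,i,j)$ with $i<j$. The structure constants are the vector $c=(c_{ijk})\in\mathbb{R}^m$ (indexed by $\mathcal I_\Delta$, $i<j$) with $de^k=\sum c_{ijk}e^{i}\wedge e^{j}$; all its entries are nonzero. The root matrix $M_\Delta$ is the $m\times n$ integer matrix whose row indexed by $\{\{i,j\},k\}$ has entry $1$ in column $k$, entry $-1$ in columns $i$ and $j$, and $0$ elsewhere; $M_{\Delta,2}\colon(\mathbb{Z}_2)^n\to(\mathbb{Z}_2)^m$ is its reduction mod 2. For $x\in\mathbb{R}\setminus\{0\}$, $\operatorname{logsign}x=0$ if $x>0$ and $1$ if $x<0$; for a vector it is applied componentwise, and for a diagonal metric $\operatorname{logsign} g=(\operatorname{logsign} g_i)_i$.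 A diagonal metric is a nondegenerate (possibly indefinite) scalar product on $\mathfrak{g}$ for which the nice basis is orthogonal; $\operatorname{Ric}$ denotes the Ricci operator of the corresponding left-invariant pseudoriemannian metric. $[k]\in\mathbb{R}^n$ is the vector with all entries $k$. For $X,\alpha\in\mathbb{R}^m$, $\lvert X\rvert^\alpha=\prod_j\lvert x_j\rvert^{\alpha_j}$. *)

(* Defs.v *)
From HB Require Import structures.
From mathcomp Require Import all_boot all_order all_algebra.
From mathcomp Require Import reals exp.
Set Implicit Arguments. Unset Strict Implicit. Unset Printing Implicit Defensive.
Import Order.TTheory GRing.Theory Num.Theory.
Local Open Scope ring_scope.

Section NiceLie.
Variable R : realType.
Variable n : nat.
(* Lie bracket in the basis e_0..e_{n-1}:  [e_i, e_j] = \sum_k C i j k e_k. *)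
Variable C : 'I_n -> 'I_n -> 'I_n -> R.

Definition is_lie : Prop :=
  (forall i j l, C i j l = - C j i l) /\
  (forall i j k p, \sum_l (C i j l * C l k p + C j k l * C l i p + C k i l * C l j p) = 0).

Definition lieb (x y : 'rV[R]_n) : 'rV[R]_n :=
  \row_l \sum_i \sum_j x 0 i * y 0 j * C i j l.

Definition nilpotent_lie : Prop :=
  exists N : nat, forall (xs : seq 'rV[R]_n) (y : 'rV[R]_n),
    size xs = N -> foldr lieb y xs = 0.

(* the basis is nice: each [e_i,e_j] is a multiple of some e_h, and each
   e_i _| de^k = - \sum_j C i j k e^j  is a multiple of some e^h *)
Definition nice_basis : Prop :=
  (forall i j, exists h, forall l, l != h -> C i j l = 0) /\
  (forall i l, exists h, forall j, j != h -> C i j l = 0).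

(* Arrows of the nice diagram, as triples ((k, i), j) with i < j and
   e_k a nonzero multiple of [e_i,e_j]; enumerated lexicographically in (k,i,j). *)
Definition arrows : seq (('I_n * 'I_n) * 'I_n) :=
  filter (fun t : ('I_n * 'I_n) * 'I_n => (t.1.2 < t.2)%N && (C t.1.2 t.2 t.1.1 != 0))
         (enum {: ('I_n * 'I_n) * 'I_n}).

Definition m_arrows : nat := size arrows.

Definition arrow (a : 'I_m_arrows) : ('I_n * 'I_n) * 'I_n := tnth (in_tuple arrows) a.

Definition root_mx_int : 'M[int]_(m_arrows, n) :=
  \matrix_(a, l) (((l == (arrow a).1.1)%:R - (l == (arrow a).1.2)%:R
                   - (l == (arrow a).2)%:R) : int).

Definition root_mx : 'M[R]_(m_arrows, n) := map_mx (fun z : int => z%:~R) root_mx_int.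

Definition root_mx2 : 'M['F_2]_(m_arrows, n) := map_mx (fun z : int => z%:~R) root_mx_int.

(* structure constants: de^k = \sum_{i<j} c_{ijk} e^i /\ e^j, with
   de^k(x,y) = - e^k([x,y]) and (e^i /\ e^j)(e_i,e_j) = 1, so c_{ijk} = - C i j k *)
Definition struct_const : 'cV[R]_m_arrows :=
  \col_a (- C (arrow a).1.2 (arrow a).2 (arrow a).1.1).

Variable g : 'I_n -> R.   (* g = \sum_i g_i e^i (x) e^i *)

(* nabla_{e_i} e_j = \sum_l Gamma i j l e_l, from the Koszul formula
   2 g(nabla_X Y, Z) = g([X,Y],Z) - g([Y,Z],X) + g([Z,X],Y) *)
Definition christoffel (i j l : 'I_n) : R :=
  (C i j l * g l - C j l i * g i + C l i j * g j) / (2 * g l).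

(* R(e_a,e_b) e_c = \sum_d riem a b c d e_d, with
   R(X,Y) = nabla_X nabla_Y - nabla_Y nabla_X - nabla_[X,Y] *)
Definition riem (a b c d : 'I_n) : R :=
  \sum_l (christoffel b c l * christoffel a l d - christoffel a c l * christoffel b l d
          - C a b l * christoffel l c d).

Definition ric (b c : 'I_n) : R := \sum_a riem a b c a.

(* Ricci operator: g(Ric Y, Z) = ric(Y, Z); column b is Ric e_b *)
Definition ricci_op : 'M[R]_n := \matrix_(c, b) (ric b c / g c).

End NiceLie.

Definition logsign (R : realType) (x : R) : 'F_2 := if x < 0 then 1 else 0.

Definition powvec (R : realType) (m : nat) (X : 'cV[R]_m) (alpha : 'rV[R]_m) : R :=
  \prod_(j < m) (`|X j 0| `^ (alpha 0 j)).

(* Main.v *)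
Require Import Defs.
From HB Require Import structures.
From mathcomp Require Import all_boot all_order all_algebra.
From mathcomp Require Import reals exp.
From mathcomp Require Import sequences.
From mathcomp Require Import ring lra.
Import Order.TTheory GRing.Theory Num.Theory.
Local Open Scope ring_scope.



Section Nil.
Variable R : realType.
Variable n : nat.
Variable C : 'I_n -> 'I_n -> 'I_n -> R.
Hypothesis hanti : forall i j l, C i j l = - C j i l.
Hypothesis hnice : nice_basis C.
Hypothesis hnil : nilpotent_lie C.

Lemma C_ii i l : C i i l = 0.
Proof.
have h := hanti i i l.
have : 2 * C i i l = 0 by rewrite mulr2n mulrDl mul1r {1}h addNr.
by move/eqP; rewrite mulf_eq0 pnatr_eq0 /= => /eqP.
Qed.

Definition ev (a : 'I_n) : 'rV[R]_n := delta_mx 0 a.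

Lemma lieb_ev x a : lieb C (ev x) (ev a) = \row_l C x a l.
Proof.
apply/rowP => l; rewrite !mxE (bigD1 x) //= [X in _ + X]big1; last first.
  move=> i /negbTE hi; by apply: big1 => j _; rewrite !mxE hi /= !mul0r.
rewrite addr0 (bigD1 a) //= [X in _ + X]big1; last first.
  by move=> j /negbTE hj; rewrite !mxE hj /= mulr0 mul0r.
by rewrite !mxE !eqxx /= !mul1r addr0.
Qed.

Lemma liebZ u s v : lieb C u (s *: v) = s *: lieb C u v.
Proof.
apply/rowP => l; rewrite !mxE mulr_sumr; apply: eq_bigr => i _.
rewrite mulr_sumr; apply: eq_bigr => j _; rewrite !mxE; ring.
Qed.

Lemma lieb_ev1 x a l : C x a l != 0 -> lieb C (ev x) (ev a) = C x a l *: ev l.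
Proof.
move=> nz; rewrite lieb_ev; case: hnice => [h1 _]; have [h hh] := h1 x a.
have lh : l = h by apply/eqP; apply: contraNT nz => /hh ->.
apply/rowP => l'; rewrite !mxE /=.
have [->|ne] := eqVneq l' l; first by rewrite ?eqxx ?mulr1.
by rewrite ?(negbTE ne) ?andbF ?mulr0 hh // -lh.
Qed.

Lemma keyK x y a l : C y a l * C x l a = 0.
Proof.
apply/eqP; apply/negP => /negP nz.
move: nz; rewrite mulf_eq0 negb_or => /andP [nz1 nz2].
set lam := C y a l * C x l a.
pose xs p := flatten (nseq p [:: ev x; ev y]).
have hxs p : foldr (lieb C) (ev a) (xs p) = lam ^+ p *: ev a.
  elim: p => [|p IH]; first by rewrite scale1r.
  rewrite /xs /= IH !liebZ (lieb_ev1 _ _ _ nz1) liebZ (lieb_ev1 _ _ _ nz2) !scalerA exprS.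
  by congr (_ *: _); rewrite /lam; ring.
have [N hN] := hnil.
have sz : size (xs N) = (N + N)%N.
  by rewrite /xs size_flatten /shape map_nseq /= sumn_nseq mul2n addnn.
have : foldr (lieb C) (ev a) (xs N) = 0.
  rewrite -(cat_take_drop N (xs N)) foldr_cat; apply: hN.
  by rewrite size_take_min sz; apply/minn_idPl; rewrite leq_addr.
rewrite hxs => /rowP /(_ a); rewrite !mxE !eqxx mulr1 /= => /eqP.
by rewrite expf_eq0 (negbTE (_ : lam != 0)) // ?andbF // mulf_neq0.
Qed.
End Nil.



Section Ric.
Variable R : realType.
Variable n : nat.
Variable C : 'I_n -> 'I_n -> 'I_n -> R.
Hypothesis hanti : forall i j l, C i j l = - C j i l.
Hypothesis hnice : nice_basis C.
Hypothesis hnil : nilpotent_lie C.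
Variable g : 'I_n -> R.
Hypothesis gnz : forall i, g i != 0.

Lemma C_aa0 l a : C l a a = 0.
Proof. by have /eqP := keyK _ _ _ hnice hnil l l a a; rewrite mulf_eq0 orbb => /eqP. Qed.

Lemma chr_aa a l : christoffel C g a l a = 0.
Proof.
rewrite /christoffel (hanti a l a) !C_aa0 (C_ii _ _ _ hanti).
by rewrite oppr0 !mul0r subrr addr0 mul0r.
Qed.

Definition Fr b c a l :=
  - (C b a l * C c a l * g l / g a) / 2 + C l a b * C l a c * g b * g c / (g l * g a) / 4.

Definition Er b c a l :=
  christoffel C g b c l * christoffel C g a l a - christoffel C g a c l * christoffel C g b l a
  - C a b l * christoffel C g l c a.

Lemma pointwise b c a l : Er b c a l + Er b c l a = Fr b c a l + Fr b c l a.
Proof.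
rewrite /Er /Fr !chr_aa !mulr0 !sub0r /christoffel.
rewrite [C a c l]hanti [C l c a]hanti [C l a c]hanti [C l b a]hanti [C l a b]hanti [C a b l]hanti.
have z1 := keyK _ _ _ hnice hnil c b a l.
have z2 := keyK _ _ _ hnice hnil b c a l.
have ga := gnz a; have gl := gnz l; have gb := gnz b; have gc := gnz c.
move/eqP: z1; rewrite mulf_eq0 => /orP [] /eqP z1;
move/eqP: z2; rewrite mulf_eq0 => /orP [] /eqP z2; rewrite ?z1 ?z2; field; 
  by rewrite ?ga ?gl ?gb ?gc.
Qed.
End Ric.



Section Arr.
Variable R : realType.
Variable n : nat.
Variable C : 'I_n -> 'I_n -> 'I_n -> R.

Lemma sum_arrows (f : ('I_n * 'I_n) * 'I_n -> R) :
  \sum_(a < m_arrows C) f (arrow a) =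
  \sum_(k < n) \sum_(i < n) \sum_(j < n | ((i < j)%N && (C i j k != 0))) f ((k, i), j).
Proof.
transitivity (\sum_(t <- arrows C) f t).
  have := (big_tnth 0 +%R (arrows C) xpredT f). rewrite /=. by move=> ->.
rewrite /arrows big_filter big_enum_cond /=.
rewrite big_mkcond /=.
rewrite [RHS](eq_bigr (fun k => \sum_(i < n) \sum_(j < n) (if (i < j)%N && (C i j k != 0) then f ((k, i), j) else 0))); last first.
  by move=> k _; apply: eq_bigr => i _; rewrite big_mkcond.
rewrite pair_bigA pair_bigA /=.
by apply: eq_bigr => [[[k i] j]] _.
Qed.

Lemma sumD' (I : Type) (r : seq I) (P : pred I) (F1 F2 : I -> R) :
  \sum_(i <- r | P i) F1 i + \sum_(i <- r | P i) F2 i = \sum_(i <- r | P i) (F1 i + F2 i).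
Proof. by rewrite big_split. Qed.

Lemma sumB' (I : Type) (r : seq I) (P : pred I) (F1 F2 : I -> R) :
  \sum_(i <- r | P i) F1 i - \sum_(i <- r | P i) F2 i = \sum_(i <- r | P i) (F1 i - F2 i).
Proof. by rewrite -sumrN sumD'. Qed.

Lemma sum_half (S : 'I_n -> 'I_n -> R) : (forall i j, S i j = S j i) -> (forall i, S i i = 0) ->
  \sum_(i < n) \sum_(j < n | (i < j)%N) S i j = (\sum_(i < n) \sum_(j < n) S i j) / 2.
Proof.
move=> Ss S0.
set A := (X in X = _).
have eA : A = \sum_(i < n) \sum_(j < n) (if (j < i)%N then S j i else 0).
  rewrite exchange_big /A; apply: eq_bigr => i _; rewrite big_mkcond; apply: eq_bigr => j _ /=.
  by case: ifP.
have : \sum_(i < n) \sum_(j < n) S i j = A + A.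
  rewrite {1}eA /A. rewrite sumD' /=; apply: eq_bigr => i _.
  rewrite [X in _ + X]big_mkcond sumD' /=; apply: eq_bigr => j _.
  case: (ltngtP i j) => [lij|lji|eij] /=.
  - by rewrite add0r.
  - by rewrite addr0 Ss.
  - by rewrite (val_inj eij) S0 addr0.
move=> ->; clearbody A; by field.
Qed.

Lemma sum_eq1 (b : 'I_n) (h : 'I_n -> R) : \sum_(k < n) (b == k)%:R * h k = h b.
Proof.
rewrite (bigD1 b) //= eqxx mul1r big1 ?addr0 // => k hk.
by rewrite eq_sym (negbTE hk) mul0r.
Qed.
End Arr.

Section Diag.
Variable R : realType.
Variable n : nat.
Variable C : 'I_n -> 'I_n -> 'I_n -> R.
Hypothesis hanti : forall i j l, C i j l = - C j i l.
Hypothesis hnice : nice_basis C.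
Hypothesis hnil : nilpotent_lie C.
Variable g : 'I_n -> R.
Hypothesis gnz : forall i, g i != 0.

Lemma ric_F b c : ric C g b c = \sum_(a < n) \sum_(l < n) Fr _ _ C g b c a l.
Proof.
have e : ric C g b c = \sum_(a < n) \sum_(l < n) Er _ _ C g b c a l by [].
have e2 : \sum_(a < n) \sum_(l < n) Er _ _ C g b c a l = \sum_(a < n) \sum_(l < n) Er _ _ C g b c l a.
  by rewrite exchange_big.
have e3 : \sum_(a < n) \sum_(l < n) Fr _ _ C g b c a l = \sum_(a < n) \sum_(l < n) Fr _ _ C g b c l a.
  by rewrite exchange_big.
have : 2 * ric C g b c = 2 * \sum_(a < n) \sum_(l < n) Fr _ _ C g b c a l.
  rewrite mulr2n !mulrDl !mul1r {1}e e2 {1}e3 -!big_split; apply: eq_bigr => a _.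
  rewrite -!big_split; apply: eq_bigr => l _ /=.
  exact: (pointwise _ _ _ hanti hnice hnil _ gnz).
by move/(congr1 (fun x => x / 2)); rewrite !(mulrC 2) !mulfK ?pnatr_eq0.
Qed.

Lemma Fr_off b c a l : b != c -> Fr _ _ C g b c a l = 0.
Proof.
move=> bc; case: hnice => [h1 h2].
have P1 : C b a l * C c a l = 0.
  have [h hh] := h2 a l; rewrite (hanti b a l) (hanti c a l).
  have [eb|nb] := eqVneq b h.
    by rewrite (hh c) ?oppr0 ?mulr0 // -eb eq_sym.
  by rewrite (hh b) ?oppr0 ?mul0r.
have P2 : C l a b * C l a c = 0.
  have [h hh] := h1 l a.
  have [eb|nb] := eqVneq b h.
    by rewrite (hh c) ?mulr0 // -eb eq_sym.
  by rewrite (hh b) ?mul0r.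
by rewrite /Fr P1 P2; ring.
Qed.

Lemma ric_off b c : b != c -> ric C g b c = 0.
Proof.
move=> bc; rewrite ric_F big1 // => a _; rewrite big1 // => l _; exact: Fr_off.
Qed.

Definition Xg : 'cV[R]_(m_arrows C) :=
  \col_a (C (arrow a).1.2 (arrow a).2 (arrow a).1.1 ^+ 2 * g (arrow a).1.1
            / (g (arrow a).1.2 * g (arrow a).2)).

Definition Wg (k i j : 'I_n) : R := C i j k ^+ 2 * g k / (g i * g j).

Lemma MtX b : ((root_mx C)^T *m Xg) b 0 =
  \sum_(k < n) (\sum_(i < n) \sum_(j < n)
      (((b == k)%:R - (b == i)%:R - (b == j)%:R) * Wg k i j)) / 2.
Proof.
rewrite mxE.
pose f := fun t : ('I_n * 'I_n) * 'I_n =>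
   ((b == t.1.1)%:R - (b == t.1.2)%:R - (b == t.2)%:R) * Wg t.1.1 t.1.2 t.2.
transitivity (\sum_(a < m_arrows C) f (arrow a)).
  by apply: eq_bigr => a _; rewrite !mxE !intrB !mulrz_nat.
rewrite sum_arrows; apply: eq_bigr => k _.
rewrite -sum_half; last first.
- by move=> i; rewrite /Wg (C_ii _ _ _ hanti) expr0n /= !mul0r mulr0.
- by move=> i j; rewrite /Wg (hanti i j k) sqrrN; congr (_ * _); [ring | rewrite (mulrC (g i))].
apply: eq_bigr => i _; rewrite big_mkcondr /=; apply: eq_bigr => j _.
rewrite /f /=; case: eqP => [e|//]; by rewrite /Wg e expr0n /= !mul0r mulr0.
Qed.

Lemma ric_diag b : ric C g b b / g b = ((root_mx C)^T *m Xg) b 0 / 2.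
Proof.
rewrite MtX -mulr_suml.
have s1 : \sum_(k < n) \sum_(i < n) \sum_(j < n) ((b == k)%:R * Wg k i j) =
          \sum_(i < n) \sum_(j < n) Wg b i j.
  rewrite -(sum_eq1 _ _ b (fun k => \sum_(i < n) \sum_(j < n) Wg k i j)).
  apply: eq_bigr => k _; rewrite mulr_sumr; apply: eq_bigr => i _; by rewrite mulr_sumr.
have s2 : \sum_(k < n) \sum_(i < n) \sum_(j < n) ((b == i)%:R * Wg k i j) =
          \sum_(k < n) \sum_(j < n) Wg k b j.
  apply: eq_bigr => k _.
  rewrite -(sum_eq1 _ _ b (fun i => \sum_(j < n) Wg k i j)).
  apply: eq_bigr => i _; by rewrite mulr_sumr.
have s3 : \sum_(k < n) \sum_(i < n) \sum_(j < n) ((b == j)%:R * Wg k i j) =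
          \sum_(k < n) \sum_(i < n) Wg k i b.
  apply: eq_bigr => k _; apply: eq_bigr => i _.
  by rewrite -(sum_eq1 _ _ b (fun j => Wg k i j)).
have sp : \sum_(k < n) \sum_(i < n) \sum_(j < n)
      (((b == k)%:R - (b == i)%:R - (b == j)%:R) * Wg k i j) =
   \sum_(k < n) \sum_(i < n) \sum_(j < n) ((b == k)%:R * Wg k i j)
   - \sum_(k < n) \sum_(i < n) \sum_(j < n) ((b == i)%:R * Wg k i j)
   - \sum_(k < n) \sum_(i < n) \sum_(j < n) ((b == j)%:R * Wg k i j).
  rewrite !sumB'; apply: eq_bigr => k _; rewrite !sumB'; apply: eq_bigr => i _.
  rewrite !sumB'; apply: eq_bigr => j _; ring.
rewrite sp s1 s2 s3 ric_F.
rewrite [\sum_(i < n) \sum_(j < n) Wg b i j]exchange_big.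
rewrite [\sum_(k < n) \sum_(j < n) Wg k b j]exchange_big.
rewrite [\sum_(k < n) \sum_(i < n) Wg k i b]exchange_big.
rewrite !sumB' !mulr_suml; apply: eq_bigr => a _.
rewrite !sumB' !mulr_suml; apply: eq_bigr => l _.
rewrite /Fr /Wg (hanti l a b) (hanti a b l).
have ga := gnz a; have gl := gnz l; have gb := gnz b.
field; by rewrite ?ga ?gl ?gb.
Qed.

End Diag.



Lemma F2_opp (x : 'F_2) : - x = x.
Proof. apply: oppr_pchar2. exact: pchar_Fp. Qed.

Lemma F2_cases (x : 'F_2) : x = 0 \/ x = 1.
Proof. by case: x => [[|[|m]] //= hm]; [left|right]; apply/val_inj. Qed.

Lemma F2_10 : (1 : 'F_2) != 0. Proof. by []. Qed.

Lemma sum_eq1g (V : pzRingType) (n : nat) (k : 'I_n) (h : 'I_n -> V) :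
  \sum_(l < n) (l == k)%:R * h l = h k.
Proof.
rewrite (bigD1 k) //= eqxx mul1r big1 ?addr0 // => l hl.
by rewrite (negbTE hl) mul0r.
Qed.

Lemma sum_root (V : pzRingType) (n : nat) (k i j : 'I_n) (h : 'I_n -> V) :
  \sum_(l < n) ((l == k)%:R - (l == i)%:R - (l == j)%:R) * h l = h k - h i - h j.
Proof.
rewrite -!(sum_eq1g _ _ _ h) -!sumrN -!big_split /=; apply: eq_bigr => l _.
by rewrite !mulrBl.
Qed.

Section Sign.
Variable R : realType.

Lemma ls_mul (x y : R) : x != 0 -> y != 0 -> logsign (x * y) = logsign x + logsign y.
Proof.
move=> hx hy; rewrite /logsign mulr_lt0 hx hy /=.
case: (x < 0); case: (y < 0) => /=; rewrite ?addr0 ?add0r //.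
by apply/eqP.
Qed.

Lemma ls_inv (x : R) : logsign (x^-1) = logsign x.
Proof. by rewrite /logsign invr_lt0. Qed.

Lemma ls_sq (x : R) : x != 0 -> logsign (x ^+ 2) = 0.
Proof.
move=> hx; rewrite /logsign ltNge (ltW _) //.
by rewrite exprn_even_gt0 //= hx orbT.
Qed.

Lemma ls_eq (x y : R) : x != 0 -> y != 0 -> `|x| = `|y| -> logsign x = logsign y -> x = y.
Proof.
move=> hx hy hn; rewrite /logsign.
have [xn|xp] := ltP x 0; have [yn|yp] := ltP y 0 => // hl.
- by apply: oppr_inj; rewrite -(ltr0_norm xn) -(ltr0_norm yn) hn.
- by rewrite -(ger0_norm xp) -(ger0_norm yp) hn.
Qed.

Lemma powvec_exp (m : nat) (X : 'cV[R]_m) (al : 'rV[R]_m) :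
  (forall j, X j 0 != 0) ->
  powvec X al = expR (\sum_(j < m) al 0 j * ln `|X j 0|).
Proof.
move=> hX; rewrite expR_sum /powvec; apply: eq_bigr => j _.
by rewrite /powR normr_eq0 (negbTE (hX j)).
Qed.

Lemma solve_lin (m n : nat) (A : 'M[R]_(m, n)) (w : 'cV[R]_m) :
  (forall u : 'rV[R]_m, u *m A = 0 -> u *m w = 0) -> exists y : 'cV[R]_n, A *m y = w.
Proof.
move=> hw.
have : (w^T <= A^T)%MS.
  rewrite submxE; apply/eqP.
  set K := cokermx A^T.
  have hK : A^T *m K = 0 := mulmx_coker _. clearbody K.
  apply: trmx_inj; rewrite trmx_mul trmx0.
  apply/row_matrixP => i; rewrite row_mul row0 trmxK; apply: hw.
  rewrite -row_mul.
  have -> : K^T *m A = (A^T *m K)^T by rewrite trmx_mul trmxK.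
  by rewrite hK trmx0 row0.
case/submxP => D hD; exists D^T.
by rewrite -(trmxK w) hD trmx_mul trmxK.
Qed.
End Sign.



Section Main.
Variable R : realType.
Variable n : nat.
Variable C : 'I_n -> 'I_n -> 'I_n -> R.
Hypothesis hanti : forall i j l, C i j l = - C j i l.
Hypothesis hnice : nice_basis C.
Hypothesis hnil : nilpotent_lie C.

Lemma arrow_nz (a : 'I_(m_arrows C)) : C (arrow a).1.2 (arrow a).2 (arrow a).1.1 != 0.
Proof.
have : arrow a \in arrows C by rewrite /arrow mem_tnth.
by rewrite /arrows mem_filter => /andP [/andP [_ h] _].
Qed.

Lemma sc_nz (a : 'I_(m_arrows C)) : struct_const C a 0 != 0.
Proof. by rewrite mxE oppr_eq0 arrow_nz. Qed.

Lemma rowM (v : 'cV[R]_n) (a : 'I_(m_arrows C)) :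
  (root_mx C *m v) a 0 = v (arrow a).1.1 0 - v (arrow a).1.2 0 - v (arrow a).2 0.
Proof.
rewrite mxE -(sum_root _ _ _ _ _ (fun l => v l 0)); apply: eq_bigr => l _.
by rewrite !mxE !intrB !mulrz_nat.
Qed.

Lemma rowM2 (v : 'cV['F_2]_n) (a : 'I_(m_arrows C)) :
  (root_mx2 C *m v) a 0 = v (arrow a).1.1 0 + v (arrow a).1.2 0 + v (arrow a).2 0.
Proof.
rewrite mxE (_ : v (arrow a).1.1 0 + _ + _ = v (arrow a).1.1 0 - v (arrow a).1.2 0 - v (arrow a).2 0); last first.
  by rewrite !F2_opp.
rewrite -(sum_root _ _ _ _ _ (fun l => v l 0)); apply: eq_bigr => l _.
by rewrite !mxE !intrB !mulrz_nat.
Qed.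

Section G.
Variable g : 'I_n -> R.
Hypothesis gnz : forall i, g i != 0.

Lemma Xg_nz (a : 'I_(m_arrows C)) : Xg _ _ C g a 0 != 0.
Proof.
rewrite mxE; apply: mulf_neq0; last by rewrite invr_eq0 mulf_neq0.
by apply: mulf_neq0 => //; rewrite expf_neq0 // arrow_nz.
Qed.

Lemma Xg_ls (a : 'I_(m_arrows C)) : logsign (Xg _ _ C g a 0) =
  logsign (g (arrow a).1.1) + logsign (g (arrow a).1.2) + logsign (g (arrow a).2).
Proof.
have hc := arrow_nz a.
rewrite mxE ls_mul ?ls_inv; last 2 first.
- by rewrite mulf_neq0 // expf_neq0.
- by rewrite invr_eq0 mulf_neq0.
rewrite ls_mul ?ls_sq ?expf_neq0 // add0r ls_mul // addrA.
by [].
Qed.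

Lemma Xg_ln (a : 'I_(m_arrows C)) : ln `|Xg _ _ C g a 0| = 2 * ln `|struct_const C a 0| +
  (ln `|g (arrow a).1.1| - ln `|g (arrow a).1.2| - ln `|g (arrow a).2|).
Proof.
have hc := arrow_nz a.
have p1 : 0 < `|C (arrow a).1.2 (arrow a).2 (arrow a).1.1| by rewrite normr_gt0.
have pk : 0 < `|g (arrow a).1.1| by rewrite normr_gt0.
have pi : 0 < `|g (arrow a).1.2| by rewrite normr_gt0.
have pj : 0 < `|g (arrow a).2| by rewrite normr_gt0.
rewrite !mxE normrN !normrM normfV normrM.
rewrite !lnM ?posrE ?mulr_gt0 ?invr_gt0 //.
rewrite lnV ?posrE ?mulr_gt0 // !lnM ?posrE //.
ring.
by rewrite mulr_gt0.
Qed.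
End G.

Lemma ric_char (g : 'I_n -> R) (k : R) : (forall i, g i != 0) ->
  (ricci_op C g = (k / 2)%:M <-> forall b, ((root_mx C)^T *m Xg _ _ C g) b 0 = k).
Proof.
move=> gnz; split.
  move=> h b; move/matrixP: h => /(_ b b) h; rewrite !mxE eqxx mulr1n in h.
  rewrite (ric_diag _ _ _ hanti hnice hnil _ gnz) in h; lra.
move=> h; apply/matrixP => c b; rewrite !mxE.
have [ebc|nbc] := eqVneq c b.
  by rewrite ebc mulr1n (ric_diag _ _ _ hanti hnice hnil _ gnz) h.
rewrite (ric_off _ _ _ hanti hnice hnil _ gnz) ?mul0r ?mulr0n //.
by rewrite eq_sym.
Qed.

End Main.



Theorem theorem2p1 (R : realType) (n : nat) (C : 'I_n -> 'I_n -> 'I_n -> R)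
  (hlie : is_lie C) (hnice : nice_basis C) (hnil : nilpotent_lie C)
  (k : R) (delta : 'cV['F_2]_n)
  (r : nat) (alpha : 'M[R]_(r, m_arrows C))
  (halpha : row_free alpha && (alpha == kermx (root_mx C))%MS) :
  (exists g : 'I_n -> R,
      (forall i, g i != 0) /\ (forall i, logsign (g i) = delta i 0) /\
      ricci_op C g = (k / 2)%:M)
  <->
  (exists X : 'cV[R]_(m_arrows C),
      (root_mx C)^T *m X = const_mx k /\
      (forall a, X a 0 != 0) /\
      map_mx (@logsign R) X = root_mx2 C *m delta /\
      (forall i : 'I_r, powvec X (row i alpha) = powvec (struct_const C) (2 *: row i alpha))).
Proof.
have hanti : forall i j l, C i j l = - C j i l by case: hlie.
move/andP: halpha => [_ /andP [h1 h2]].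
have rowK : forall i, row i alpha *m root_mx C = 0.
  by move=> i; apply/sub_kermxP; exact: submx_trans (row_sub i alpha) h1.
split.
  case=> g [gnz [gls hric]].
  exists (Xg _ _ C g); split; [|split; [|split]].
  - apply/colP => b; rewrite [RHS]mxE.
    exact: (proj1 (ric_char _ _ _ hanti hnice hnil g k gnz) hric b).
  - exact: Xg_nz.
  - apply/colP => a; rewrite [LHS]mxE Xg_ls // !gls rowM2 //.
  - move=> i; rewrite !powvec_exp; try (by move=> j; exact: sc_nz);
      try (by move=> j; exact: Xg_nz).
    congr expR.
    pose L : 'cV[R]_n := \col_l ln `|g l|.
    have e0 : \sum_j (row i alpha) 0 j * (root_mx C *m L) j 0 = 0.
      have := congr1 (fun M : 'rV_n => (M *m L) 0 0) (rowK i).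
      rewrite /= -mulmxA mul0mx => h.
      rewrite [X in X = _]mxE [X in _ = X]mxE in h; exact: h.
    transitivity (\sum_j (2 *: row i alpha) 0 j * ln `|struct_const C j 0| +
       \sum_j (row i alpha) 0 j * (root_mx C *m L) j 0); last by rewrite e0 addr0.
    rewrite sumD'; apply: eq_bigr => j _.
    rewrite Xg_ln // rowM !mxE; ring.
case=> X [hK [hH [hL hP]]].
pose w : 'cV[R]_(m_arrows C) := \col_a (ln `|X a 0| - 2 * ln `|struct_const C a 0|).
have aw : alpha *m w = 0.
  apply/colP => i; rewrite !mxE.
  have := hP i; rewrite !powvec_exp; try (by move=> j; exact: sc_nz);
      try (by move=> j; exact: hH).
  move/expR_inj => e.
  have -> : \sum_j alpha i j * w j 0 =
     \sum_j (row i alpha) 0 j * ln `|X j 0| - \sum_j (2 *: row i alpha) 0 j * ln `|struct_const C j 0|.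
    rewrite sumB'; apply: eq_bigr => j _; rewrite !mxE; ring.
  by rewrite e subrr.
have hw : forall u : 'rV[R]_(m_arrows C), u *m root_mx C = 0 -> u *m w = 0.
  move=> u hu0; have hu : (u <= kermx (root_mx C))%MS by apply/sub_kermxP.
  have /submxP [D ->] := submx_trans hu h2.
  by rewrite -mulmxA aw mulmx0.
have [y hy] := solve_lin _ _ _ (root_mx C) w hw.
pose g l := (if delta l 0 == 1 then -1 else 1) * expR (y l 0).
have gnz : forall l, g l != 0.
  move=> l; apply: mulf_neq0; last by rewrite gt_eqF ?expR_gt0.
  by case: ifP => _; rewrite ?oppr_eq0 oner_eq0.
have gls : forall l, logsign (g l) = delta l 0.
  move=> l; rewrite /g /logsign; case: (F2_cases (delta l 0)) => ->.
    have -> : ((0 : 'F_2) == 1) = false by [].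
    by rewrite mul1r ltNge (ltW (expR_gt0 _)).
  by rewrite eqxx mulN1r oppr_lt0 expR_gt0.
have gln : forall l, ln `|g l| = y l 0.
  move=> l; rewrite /g normrM (gtr0_norm (expR_gt0 _)).
  by case: ifP => _; rewrite ?normrN normr1 mul1r expRK.
have XX : Xg _ _ C g = X.
  apply/colP => a; apply: ls_eq; [exact: Xg_nz|exact: hH| |].
  - apply: ln_inj; rewrite ?posrE ?normr_gt0 ?Xg_nz ?hH //.
    rewrite Xg_ln // !gln.
    have := congr1 (fun v : 'cV[R]_(m_arrows C) => v a 0) hy; rewrite /= rowM /w mxE => ->.
    ring.
  - rewrite Xg_ls // !gls -rowM2.
    by have := congr1 (fun v : 'cV['F_2]_(m_arrows C) => v a 0) hL; rewrite /= mxE => <-.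
exists g; split; [exact: gnz | split; [exact: gls|]].
apply/(ric_char _ _ _ hanti hnice hnil g k gnz) => b.
rewrite XX; have := congr1 (fun v : 'cV[R]_n => v b 0) hK; by rewrite /= [RHS]mxE.
Qed.
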